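(* Let $\pi:(X,T)\to(Y,T)$ be an extension (factor map) of minimal systems and $d\in\mathbb{N}$. (1) If $Y$ is a $d$-step topological characteristic factor of $X$ and $\pi$ is open, then $(\pi^{(d+1)})^{-1}(N_{d+1}(Y))=N_{d+1}(X)$. (2) If $N_{d+1}(X)$ is $\pi^{(d+1)}$-saturated, i.e. $(\pi^{(d+1)})^{-1}(\pi^{(d+1)}(N_{d+1}(X)))=N_{d+1}(X)$, then $Y$ is a $d$-step topological characteristic factor of $X$.
   Context: $\pi^{(m)}=\pi\times\cdots\times\pi$ ($m$ times). $N_m(X)=\overline{\{(T^{p+q}x,\dots,T^{p+mq}x):x\in X,p,q\in\mathbb{Z}\}}$. $Y$ is a $d$-step topological characteristic factor of $X$ (via $\pi$) if there is a dense $G_\delta$ subset $\Omega\subset X$ such that for every $x\in\Omega$ the set $L_x=\overline{\{(T^nx,T^{2n}x,\dots,T^{dn}x):n\in\mathbb{Z}\}}\subset X^d$ satisfies $(\pi^{(d)})^{-1}(\pi^{(d)}(L_x))=L_x$. *)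

(* Defs.v *)
From HB Require Import structures.
From mathcomp Require Import all_boot all_order all_algebra.
From mathcomp Require Import all_classical all_reals all_analysis.
Set Implicit Arguments. Unset Strict Implicit. Unset Printing Implicit Defensive.
Import Order.TTheory GRing.Theory Num.Theory.
Local Open Scope classical_set_scope.
Local Open Scope ring_scope.

Definition iterz {X : Type} (T Ti : X -> X) (n : int) : X -> X :=
  match n with
  | Posz k => iter k T
  | Negz k => iter k.+1 Ti
  end.

Definition tds (X : topologicalType) (T Ti : X -> X) : Prop :=
  compact [set: X] /\ continuous T /\ continuous Ti /\
  cancel T Ti /\ cancel Ti T.

Definition minimal_sys (X : topologicalType) (T : X -> X) : Prop :=
  [set: X] !=set0 /\
  forall A : set X, closed A -> T @` A `<=` A -> A = set0 \/ A = setT.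

Definition factor_map (X Y : topologicalType) (TX : X -> X) (TY : Y -> Y)
  (pi : X -> Y) : Prop :=
  continuous pi /\ (forall y, exists x, pi x = y) /\
  (forall x, pi (TX x) = TY (pi x)).

Definition open_map (X Y : topologicalType) (pi : X -> Y) : Prop :=
  forall U : set X, open U -> open (pi @` U).

Definition G_delta (X : topologicalType) (S : set X) : Prop :=
  exists U : nat -> set X, (forall n, open (U n)) /\ S = \bigcap_n U n.

Definition pi_pow (X Y : Type) (m : nat) (pi : X -> Y)
  : ('I_m -> X) -> ('I_m -> Y) := fun f => pi \o f.

(* N_m(X) = closure {(T^{p+q}x, ..., T^{p+mq}x)} ; coordinate i : 'I_m
   is T^{p+(i+1)q} x *)
Definition Nset (X : topologicalType) (T Ti : X -> X) (m : nat)
  : set {ptws 'I_m -> X} :=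
  closure [set f : {ptws _ -> X} | exists (x : X) (p q : int),
     f = (fun i : 'I_m => iterz T Ti (p + (i.+1)%:Z * q) x)].

Definition Lset (X : topologicalType) (T Ti : X -> X) (d : nat) (x : X)
  : set {ptws 'I_d -> X} :=
  closure [set f : {ptws _ -> X} | exists n : int,
     f = (fun i : 'I_d => iterz T Ti ((i.+1)%:Z * n) x)].

Arguments Nset {X} T Ti m.
Arguments Lset {X} T Ti d x.

Definition saturated (X Y : Type) (m : nat) (pi : X -> Y)
  (A : set ('I_m -> X)) : Prop :=
  (pi_pow pi) @^-1` ((pi_pow pi) @` A) = A.

Definition top_char_factor (X Y : topologicalType) (TX TiX : X -> X)
  (pi : X -> Y) (d : nat) : Prop :=
  exists Omega : set X, G_delta Omega /\ dense Omega /\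
    forall x, Omega x -> saturated pi (Lset TX TiX d x).

(* Main.v *)
Require Import Defs.
From HB Require Import structures.
From mathcomp Require Import all_boot all_order all_algebra.
From mathcomp Require Import all_classical all_reals all_analysis.
From mathcomp Require Import ring lra.
Import Order.TTheory GRing.Theory Num.Theory.
Local Open Scope classical_set_scope.
Local Open Scope ring_scope.
Section Iter.
Variables (A : Type) (T Ti : A -> A).
Hypotheses (TK : cancel T Ti) (TiK : cancel Ti T).

Lemma iterzS z x : iterz T Ti (z + 1) x = T (iterz T Ti z x).
Proof.
case: z => [k|k] /=.
  by rewrite addn1.
case: k => [|k]; first by rewrite /= TiK.
have -> : Negz k.+1 + 1 = Negz k.
  by rewrite !NegzE; rewrite -addn1 PoszD opprD addrK.
by rewrite /= TiK.
Qed.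

Lemma iterzN1 z x : iterz T Ti (z - 1) x = Ti (iterz T Ti z x).
Proof.
have := iterzS (z - 1) x; rewrite subrK => ->; by rewrite TK.
Qed.

Lemma iterzD a b x : iterz T Ti (a + b) x = iterz T Ti a (iterz T Ti b x).
Proof.
case: a => k.
  elim: k => [|k IH]; first by rewrite add0r.
  have -> : Posz k.+1 = Posz k + 1 by rewrite -addn1 PoszD.
  by rewrite addrAC iterzS IH -iterzS.
elim: k => [|k IH].
  by have -> : Negz 0 = 0 - 1 by []; rewrite addrAC add0r iterzN1.
have -> : Negz k.+1 = Negz k - 1 by rewrite !NegzE -addn1 PoszD opprD.
by rewrite addrAC iterzN1 IH -iterzN1.
Qed.
End Iter.
Arguments iterzD {A T Ti}.
Lemma box_nbhs {X : topologicalType} m (f : {ptws 'I_m -> X}) (P : 'I_m -> set X) :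
  (forall i, nbhs (f i) (P i)) -> nbhs f [set g : {ptws 'I_m -> X} | forall i, P i (g i)].
Proof.
move=> HP; have := @filter_forall _ _ (fun i (g : {ptws 'I_m -> X}) => P i (g i)) (nbhs f) _. apply. move=> i.
exact: (@proj_continuous 'I_m (fun _ => X) i f (P i) (HP i)).
Qed.

Lemma ptws_nbhs_box {R : realType} {X : pseudoMetricType R} m (f : {ptws 'I_m -> X}) B :
  nbhs f B -> exists2 e : R, 0 < e & forall g : {ptws 'I_m -> X}, (forall i, ball (f i) e (g i)) -> B g.
Proof.
pose F := filter_from [set e : R | 0 < e]
  (fun e => [set g : {ptws 'I_m -> X} | forall i, ball (f i) e (g i)]).
have FF : Filter F.
  apply: filter_from_filter; first by exists 1; rewrite /= ltr01.
  move=> e1 e2 e10 e20; exists (Num.min e1 e2); first by rewrite /= lt_min e10.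
  move=> g Hg; split => i; apply: le_ball (Hg i); rewrite ge_min lexx ?orbT //.
suff : F --> f by move=> /(_ B) H /H [e e0 He]; exists e.
apply/cvg_sup => i.
apply/cvg_image.
  by apply/seteqP; split => // y _; exists (fun _ => y).
move=> A /nbhs_ballP [e e0 He].
exists [set g : {ptws 'I_m -> X} | A (g i)].
  by exists e => // g Hg; apply: He; exact: Hg.
apply/seteqP; split => [y [g Ag <-] //|y Ay].
by exists (fun _ => y).
Qed.

Lemma ptws_cont {R : realType} {S : topologicalType} {X : pseudoMetricType R} m
  (phi : 'I_m -> S -> X) : (forall j, continuous (phi j)) ->
  continuous (fun s => (fun j => phi j s) : {ptws 'I_m -> X}).
Proof.
move=> Hc s B /ptws_nbhs_box [e e0 He].
have : \forall t \near s, forall j, ball (phi j s) e (phi j t).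
  apply: (@filter_forall _ _ (fun j t => ball (phi j s) e (phi j t))) => j.
  exact: (Hc j s (ball _ e) (nbhsx_ballx _ _ e0)).
by apply: filterS => t Ht; apply: He.
Qed.

Lemma closure_image_sub {S T : topologicalType} (h : S -> T) (A : set S) (C : set T) :
  continuous h -> h @` A `<=` C -> h @` closure A `<=` closure C.
Proof.
move=> hc hAC _ [w clw <-] B nB.
have [a [Aa Ba]] := clw (h @^-1` B) (hc w B nB).
by exists (h a); split => //; apply: hAC; exists a.
Qed.

Lemma baire_compact {R : realType} {X : pseudoMetricType R} (U : nat -> set X) :
  compact [set: X] -> (forall n, open (U n) /\ dense (U n)) -> dense (\bigcap_n U n).
Proof.
move=> cX HU D D0 oD.
have step : forall p : nat * set X, exists O' : set X,
    (open p.2 /\ p.2 !=set0) ->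
    [/\ open O', O' !=set0 & closure O' `<=` p.2 `&` U p.1].
  move=> [n O] /=.
  case: (pselect (open O /\ O !=set0)) => [[oO [a Oa]]|]; last first.
    by move=> h; exists set0 => /h.
  have [b [Ob Ub]] : (O `&` U n) !=set0.
    by apply: (proj2 (HU n)) => //; exists a.
  have : nbhs b (O `&` U n).
    by apply: open_nbhs_nbhs; split => //; apply: openI => //; exact: (proj1 (HU n)).
  move=> /nbhs_ballP [r /= r0 Hr].
  have r20 : 0 < r / 2 by rewrite divr_gt0.
  exists (ball b (r/2))°; move=> _; split.
  - exact: open_interior.
  - by exists b; exact: nbhsx_ballx.
  - move=> p clp; apply: Hr.
    have [q [/interior_subset q1 q2]] := clp (ball p (r/2)) (nbhsx_ballx _ _ r20).
    rewrite (splitr r); exact: ball_triangle q1 (ball_sym q2).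
have [h Hh] := choice step.
pose fix O n := if n is k.+1 then h (k, O k) else D.
have HO : forall n, open (O n) /\ O n !=set0.
  elim => [|n [Ho1 Ho2]]; first by split.
  by have [] := Hh (n, O n) (conj Ho1 Ho2).
have HOc : forall n, closure (O n.+1) `<=` O n `&` U n.
  by move=> n; have [] := Hh (n, O n) (HO n).
have Omon : forall n k, (n <= k)%N -> O k `<=` O n.
  move=> n k /subnK <-; elim: (k - n)%N => [|j IH] //=.
  move=> x Ox; apply: IH.
  by have [] := HOc (j + n)%N x (subset_closure Ox).
pose G := filter_from [set: nat] O.
have PG : ProperFilter G.
  apply: filter_from_proper.
    apply: filter_from_filter; first by exists 0%N.
    move=> i j _ _; exists (maxn i j) => //.
    by move=> x Ox; split; apply: Omon x Ox; rewrite ?leq_maxl ?leq_maxr.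
  by move=> n _; exact: (HO n).2.
have [p [_ clp]] := cX G PG filterT.
have clO : forall n, closure (O n.+1) p.
  move=> n B nB; exact: clp (O n.+1) B (ex_intro2 _ _ n.+1 I (@subset_refl _ _)) nB.
exists p; split.
  by have [] := HOc 0%N p (clO 0%N).
by move=> n _; have [] := HOc n p (clO n).
Qed.

Lemma finite_net {R : realType} {X : pseudoMetricType R} (r : R) :
  compact [set: X] -> 0 < r ->
  exists s : seq X, forall x, exists2 c, c \in s & ball c r x.
Proof.
move=> cX r0; apply: contrapT => Hn.
pose G := filter_from [set: seq X]
  (fun s => [set x | forall c, c \in s -> ~ ball c r x]).
have PG : ProperFilter G.
  apply: filter_from_proper.
    apply: filter_from_filter; first by exists [::].
    move=> s1 s2 _ _; exists (s1 ++ s2) => // x Hx.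
    by split => c Hc; apply: Hx; rewrite mem_cat Hc ?orbT.
  move=> s _; apply: contrapT => Hs; apply: Hn; exists s => x.
  apply: contrapT => Hx; apply: Hs; exists x => c cs bc; apply: Hx.
  by exists c.
have [p [_ clp]] := cX G PG filterT.
have [x [Hx Bx]] := clp _ (ball p r) (ex_intro2 _ _ [:: p] I (@subset_refl _ _)) (nbhsx_ballx _ _ r0).
by apply: (Hx p); rewrite ?mem_head.
Qed.

Lemma arith1 (j : nat) (a b : int) : (j.+1)%:Z * b + (a + b) = a + (j.+2)%:Z * b.
Proof.
have -> : (j.+2)%:Z = (j.+1)%:Z + 1 by rewrite -addn1 PoszD.
ring.
Qed.

Lemma arith2 (j : nat) (b : int) : (j.+1)%:Z * b = - b + (j.+2)%:Z * b.
Proof.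
have -> : (j.+2)%:Z = (j.+1)%:Z + 1 by rewrite -addn1 PoszD.
ring.
Qed.

Lemma cont_iter {A : topologicalType} (f : A -> A) k : continuous f -> continuous (iter k f).
Proof.
move=> fc; elim: k => [|k IH] x /=; first exact: cvg_id.
apply: continuous_comp; [exact: IH | exact: fc].
Qed.

Lemma cont_iterz {A : topologicalType} (T Ti : A -> A) n :
  continuous T -> continuous Ti -> continuous (iterz T Ti n).
Proof. by move=> Tc Tic; case: n => k /=; apply: cont_iter. Qed.

Definition cons_pt {A : Type} {d : nat} (x : A) (w : 'I_d -> A) : 'I_d.+1 -> A :=
  fun i => if unlift ord0 i is Some j then w j else x.

Lemma cons_pt0 {A : Type} {d : nat} (x : A) (w : 'I_d -> A) : cons_pt x w ord0 = x.
Proof. by rewrite /cons_pt unlift_none. Qed.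

Lemma cons_ptS {A : Type} {d : nat} (x : A) (w : 'I_d -> A) j : cons_pt x w (lift ord0 j) = w j.
Proof. by rewrite /cons_pt liftK. Qed.

Lemma orbit_cons {A : Type} (T Ti : A -> A) (d : nat) (x : A) (n : int) :
  cons_pt x (fun j : 'I_d => iterz T Ti ((j.+1)%:Z * n) x) =
  (fun i : 'I_d.+1 => iterz T Ti (- n + (i.+1)%:Z * n) x).
Proof.
apply: funext => i; case: (unliftP ord0 i) => [j ->|->].
  by rewrite cons_ptS lift0 arith2.
by rewrite cons_pt0 /= mul1r addNr.
Qed.

Section Main.
Variables (R : realType) (X Y : metricType R) (TX TiX : X -> X) (TY TiY : Y -> Y)
  (pi : X -> Y) (d : nat).
Hypotheses (tX : tds TX TiX) (tY : tds TY TiY) (fm : factor_map TX TY pi).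

Let cX : compact [set: X] := tX.1.
Let TXc : continuous TX := tX.2.1.
Let TiXc : continuous TiX := tX.2.2.1.
Let TXK : cancel TX TiX := tX.2.2.2.1.
Let TiXK : cancel TiX TX := tX.2.2.2.2.
Let TYc : continuous TY := tY.2.1.
Let TiYc : continuous TiY := tY.2.2.1.
Let TYK : cancel TY TiY := tY.2.2.2.1.
Let TiYK : cancel TiY TY := tY.2.2.2.2.
Let pic : continuous pi := fm.1.
Let piT x : pi (TX x) = TY (pi x) := fm.2.2 x.

Let piTi x : pi (TiX x) = TiY (pi x).
Proof. by rewrite -{2}(TiXK x) piT TYK. Qed.

Let pi_iter k x : pi (iter k TX x) = iter k TY (pi x).
Proof. by elim: k => [|k IH] //=; rewrite piT IH. Qed.

Let pi_iteri k x : pi (iter k TiX x) = iter k TiY (pi x).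
Proof. by elim: k => [|k IH] //=; rewrite piTi IH. Qed.

Let pi_iterz n x : pi (iterz TX TiX n x) = iterz TY TiY n (pi x).
Proof. by case: n => k; [exact: pi_iter | exact: (pi_iteri k.+1 x)]. Qed.

Let pi_pow_cont m : continuous (pi_pow pi : {ptws 'I_m -> X} -> {ptws 'I_m -> Y}).
Proof.
apply: (@ptws_cont R _ Y m (fun j (s : {ptws 'I_m -> X}) => pi (s j))) => j s.
apply: continuous_comp; [exact: proj_continuous | exact: pic].
Qed.

Lemma part1 : top_char_factor TX TiX pi d -> open_map pi ->
  (pi_pow pi) @^-1` (Nset TY TiY d.+1) = Nset TX TiX d.+1.
Proof.
move=> [Om [_ [dOm satOm]]] opi.
apply/seteqP; split; last first.
  move=> f Nf; rewrite /preimage /=.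
  have H := @closure_image_sub _ _ (pi_pow pi : {ptws 'I_d.+1 -> X} -> {ptws 'I_d.+1 -> Y})
    [set f : {ptws _ -> X} | exists (x : X) (p q : int),
     f = (fun i : 'I_d.+1 => iterz TX TiX (p + (i.+1)%:Z * q) x)]
    [set f : {ptws _ -> Y} | exists (x : Y) (p q : int),
     f = (fun i : 'I_d.+1 => iterz TY TiY (p + (i.+1)%:Z * q) x)] (pi_pow_cont _).
  apply: H; last by exists f.
  move=> _ [g [x [p [q ->]]] <-]; exists (pi x), p, q.
  by apply: funext => i; rewrite /pi_pow /= pi_iterz.
move=> f /= Nf B nB.
have [e e0 He] := ptws_nbhs_box _ _ _ nB.
pose U i := (ball (f i) e)°.
have oU i : open (U i) by exact: open_interior.
have Uf i : U i (f i) by exact: nbhsx_ballx.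
have oPU i : open (pi @` U i) by exact: opi.
have : nbhs (pi_pow pi f : {ptws 'I_d.+1 -> Y}) [set h : {ptws _ -> Y} | forall i, (pi @` U i) (h i)].
  apply: (@box_nbhs _ d.+1 (pi_pow pi f) (fun i => pi @` U i)) => i; apply: open_nbhs_nbhs; split => //; exists (f i) => //.
move=> /Nf [_ [[y [p [q ->]]] Hy]].
pose z := iterz TY TiY (p + q) y.
have Hz : forall i : 'I_d.+1, (pi @` U i) (iterz TY TiY (i%:Z * q) z).
  move=> i; rewrite /z -(iterzD TYK TiYK).
  have -> : i%:Z * q + (p + q) = p + (i.+1)%:Z * q.
    have -> : (i.+1)%:Z = i%:Z + 1 by rewrite -addn1 PoszD.
    ring.
  exact: Hy.
pose W := [set x | U ord0 x /\ forall j : 'I_d,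
  (pi @` U (lift ord0 j)) (iterz TY TiY ((j.+1)%:Z * q) (pi x))].
have oW : open W.
  rewrite openE => x [Ux Hx].
  have H1 : nbhs x (U ord0) by apply: open_nbhs_nbhs; split.
  have H2 : \forall t \near x, forall j : 'I_d,
      (pi @` U (lift ord0 j)) (iterz TY TiY ((j.+1)%:Z * q) (pi t)).
    apply: (@filter_forall _ _ (fun j t => (pi @` U (lift ord0 j)) (iterz TY TiY ((j.+1)%:Z * q) (pi t)))) => j.
    have cj : continuous (iterz TY TiY ((j.+1)%:Z * q) \o pi).
      by move=> t; apply: continuous_comp; [exact: pic | exact: cont_iterz].
    apply: (cj x); apply: open_nbhs_nbhs; split => //; exact: Hx.
  by apply: filterS (filterI H1 H2) => t [].
have W0 : W !=set0.
  have [x0 Ux0 px0] := Hz ord0.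
  exists x0; split => // j; rewrite px0 mul0r /=.
  by have := Hz (lift ord0 j); rewrite lift0.
have [x [[Ux Hx] Omx]] := dOm W W0 oW.
have /boolp.choice [w Hw] : forall j : 'I_d, exists wj,
    U (lift ord0 j) wj /\ pi wj = iterz TY TiY ((j.+1)%:Z * q) (pi x).
  by move=> j; have [wj ? ?] := Hx j; exists wj; split.
have Lw : Lset TX TiX d x w.
  rewrite -(satOm x Omx).
  exists (fun j => iterz TX TiX ((j.+1)%:Z * q) x).
    by apply: subset_closure; exists q.
  by apply: funext => j; rewrite /pi_pow /= pi_iterz (Hw j).2.
have nw : nbhs (w : {ptws 'I_d -> X}) [set g : {ptws 'I_d -> X} | forall j, U (lift ord0 j) (g j)].
  apply: (@box_nbhs _ d w (fun j => U (lift ord0 j))) => j.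
  by apply: open_nbhs_nbhs; split => //; exact: (Hw j).1.
have [_ [[n ->] Hn]] := Lw _ nw.
exists (cons_pt x (fun j : 'I_d => iterz TX TiX ((j.+1)%:Z * n) x)); split.
  by rewrite orbit_cons; exists x, (- n), n.
apply: He => i; case: (unliftP ord0 i) => [j ->|->].
  by rewrite cons_ptS; apply: interior_subset; exact: Hn.
by rewrite cons_pt0; apply: interior_subset.
Qed.

Definition OV (V : set {ptws 'I_d -> X}) : set X :=
  [set x | exists n : int, V (fun j : 'I_d => iterz TX TiX ((j.+1)%:Z * n) x)].
Definition FV (V : set {ptws 'I_d -> X}) : set X :=
  [set x | exists z : {ptws 'I_d -> X}, V z /\ Nset TX TiX d.+1 (cons_pt x z)].
Definition GoodV (V : set {ptws 'I_d -> X}) : set X :=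
  ~` (closure (FV V) `&` ~` OV V).

Lemma OV_open V : open V -> open (OV V).
Proof.
move=> oV; rewrite openE => x [n Vn].
have c : continuous (fun s : X => (fun j : 'I_d => iterz TX TiX ((j.+1)%:Z * n) s) : {ptws 'I_d -> X}).
  apply: (@ptws_cont R X X d (fun j => iterz TX TiX ((j.+1)%:Z * n))) => j.
  exact: cont_iterz.
have H : nbhs x [set s : X | V (fun j : 'I_d => iterz TX TiX ((j.+1)%:Z * n) s)]
  := c x V (open_nbhs_nbhs (conj oV Vn)).
change (nbhs x (OV V)); apply: (filterS _ H) => t Vt; by exists n.
Qed.

Lemma FV_sub V : open V -> FV V `<=` closure (OV V).
Proof.
move=> oV x [z [Vz Nxz]] B nB.
pose Q := [set f : {ptws 'I_d.+1 -> X} | B (f ord0) /\ V (fun j => f (lift ord0 j))].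
have nQ : nbhs (cons_pt x z : {ptws 'I_d.+1 -> X}) Q.
  have H1 : nbhs (cons_pt x z : {ptws 'I_d.+1 -> X}) [set f : {ptws 'I_d.+1 -> X} | B (f ord0)].
    apply: (@proj_continuous 'I_d.+1 (fun _ => X) ord0 (cons_pt x z) B).
    by rewrite /proj cons_pt0.
  have c : continuous (fun f : {ptws 'I_d.+1 -> X} => (fun j : 'I_d => f (lift ord0 j)) : {ptws 'I_d -> X}).
    apply: (@ptws_cont R _ X d (fun j (f : {ptws 'I_d.+1 -> X}) => f (lift ord0 j))) => j.
    exact: proj_continuous.
  have H2 := c (cons_pt x z) V.
  have E : (fun j : 'I_d => cons_pt x z (lift ord0 j)) = z.
    by apply: funext => j; rewrite cons_ptS.
  rewrite E in H2; have {}H2 := H2 (open_nbhs_nbhs (conj oV Vz)).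
  by apply: filterS (filterI H1 H2) => f [].
have [_ [[u [p [q ->]]] [Ba Va]]] := Nxz Q nQ.
exists (iterz TX TiX (p + 1%:Z * q) u); split => //.
exists q.
have -> : (fun j : 'I_d => iterz TX TiX ((j.+1)%:Z * q) (iterz TX TiX (p + 1%:Z * q) u)) =
    (fun j : 'I_d => iterz TX TiX (p + ((lift ord0 j).+1)%:Z * q) u).
  by apply: funext => j; rewrite -(iterzD TXK TiXK) lift0 mul1r arith1.
exact: Va.
Qed.

Lemma GoodV_open V : open V -> open (GoodV V).
Proof.
move=> oV; rewrite /GoodV setCI setCK; apply: openU.
  exact/closed_openC/closed_closure.
exact: OV_open.
Qed.

Lemma GoodV_dense V : open V -> dense (GoodV V).
Proof.
move=> oV W [w Ww] oW.
case: (pselect (W `&` OV V !=set0)) => [[v [Wv Ov]]|H].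
  by exists v; split => // -[_]; apply.
exists w; split => //; move=> [clw _].
have [y [Fy Wy]] := clw W (open_nbhs_nbhs (conj oW Ww)).
have [v [Ov Wv]] := FV_sub V oV y Fy W (open_nbhs_nbhs (conj oW Wy)).
by apply: H; exists v.
Qed.

Let rk (k : nat) : R := (k.+1%:R)^-1.
Let rk_gt0 k : 0 < rk k.
Proof. by rewrite /rk invr_gt0. Qed.

Lemma part2 : minimal_sys TX -> saturated pi (Nset TX TiX d.+1) ->
  top_char_factor TX TiX pi d.
Proof.
move=> [[x0 _] _] sat.
have /boolp.choice [s Hs] : forall k : nat, exists s : seq X,
    forall x, exists2 c, c \in s & ball c (rk k) x.
  by move=> k; exact: finite_net cX (rk_gt0 k).
pose V (kg : nat * {ffun 'I_d -> nat}) := [set h : {ptws 'I_d -> X} |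
  forall j, (ball (nth x0 (s kg.1) (kg.2 j)) (rk kg.1 + rk kg.1))° (h j)].
have oV kg : open (V kg).
  rewrite openE => h Vh.
  apply: (@box_nbhs _ d h (fun j => (ball (nth x0 (s kg.1) (kg.2 j)) (rk kg.1 + rk kg.1))°)) => j.
  by apply: open_nbhs_nbhs; split; [exact: open_interior | exact: Vh].
have approx : forall (z : {ptws 'I_d -> X}) (e : R), 0 < e ->
    exists k g, V (k, g) z /\ forall h, V (k, g) h -> forall j, ball (z j) e (h j).
  move=> z e e0.
  pose k := Num.trunc (3 / e).
  have Hk : rk k + (rk k + rk k) < e.
    have := truncnS_gt (3 / e); rewrite -/k => H.
    have -> : rk k + (rk k + rk k) = 3 / k.+1%:R by rewrite /rk; ring.
    by rewrite ltr_pdivrMr // mulrC -ltr_pdivrMr.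
  have /boolp.choice [gf Hg] : forall j : 'I_d, exists n : nat,
      ball (nth x0 (s k) n) (rk k) (z j).
    by move=> j; have [c cs bc] := Hs k (z j); exists (index c (s k)); rewrite nth_index.
  exists k, [ffun j => gf j]; split.
    move=> j; rewrite /= ffunE; apply/nbhs_ballP; exists (rk k) => //= y bzy.
    exact: ball_triangle (Hg j) bzy.
  move=> h Vh j; have := Vh j; rewrite /= ffunE => /interior_subset hb.
  apply: (le_ball (ltW Hk)).
  exact: ball_triangle (ball_sym (Hg j)) hb.
pose U n := if @unpickle (nat * {ffun 'I_d -> nat})%type n is Some kg
  then GoodV (V kg) else setT.
have oU n : open (U n) /\ dense (U n).
  rewrite /U; case: unpickle => [kg|].
    by split; [exact: GoodV_open | exact: GoodV_dense].
  split; first exact: openT.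
  by move=> O [pt Opt] _; exists pt; split.
exists (\bigcap_n U n); split; first by exists U; split => // n; exact: (oU n).1.
split; first exact: baire_compact cX oU.
move=> x Omx.
have key : forall z : {ptws 'I_d -> X},
    Nset TX TiX d.+1 (cons_pt x z) -> Lset TX TiX d x z.
  move=> z Nz; apply: contrapT => nLz.
  have [B [nB HB]] : exists B, nbhs z B /\ ~ ([set f : {ptws 'I_d -> X} |
      exists n : int, f = (fun j : 'I_d => iterz TX TiX ((j.+1)%:Z * n) x)] `&` B !=set0).
    apply: contrapT => H; apply: nLz => B nB; apply: contrapT => H'.
    by apply: H; exists B; split.
  have [e e0 He] := ptws_nbhs_box _ _ _ nB.
  have [k [g [Vz Vsub]]] := approx z e e0.
  have := Omx (pickle (k, g)) I; rewrite /U pickleK; apply; split.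
    by apply: subset_closure; exists z.
  move=> [n Vn]; apply: HB.
  exists (fun j : 'I_d => iterz TX TiX ((j.+1)%:Z * n) x); split; first by exists n.
  by apply: He; exact: Vsub.
rewrite /saturated; apply/seteqP; split; last by move=> w Lw; exists w.
move=> z [w Lw Epi].
apply: key.
rewrite -sat; exists (cons_pt x w).
  have H := @closure_image_sub _ _
    (cons_pt x : {ptws 'I_d -> X} -> {ptws 'I_d.+1 -> X})
    [set f : {ptws 'I_d -> X} | exists n : int,
       f = (fun j : 'I_d => iterz TX TiX ((j.+1)%:Z * n) x)]
    [set f : {ptws _ -> X} | exists (x : X) (p q : int),
     f = (fun i : 'I_d.+1 => iterz TX TiX (p + (i.+1)%:Z * q) x)].
  apply: H; last by exists w.
    apply: (@ptws_cont R _ X d.+1 (fun i (w : {ptws 'I_d -> X}) => cons_pt x w i)) => i.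
    rewrite /cons_pt; case: (unlift ord0 i) => [j|].
      exact: proj_continuous.
    exact: cst_continuous.
  by move=> _ [_ [n ->] <-]; rewrite orbit_cons; exists x, (- n), n.
apply: funext => i; rewrite /pi_pow /=.
case: (unliftP ord0 i) => [j ->|->]; rewrite ?cons_ptS ?cons_pt0 //.
exact: (congr1 (fun F => F j) Epi).
Qed.

End Main.

Theorem theorem4p5 (R : realType) (X Y : metricType R)
  (TX TiX : X -> X) (TY TiY : Y -> Y) (pi : X -> Y) (d : nat) :
  tds TX TiX -> tds TY TiY -> minimal_sys TX -> minimal_sys TY ->
  factor_map TX TY pi ->
  ((top_char_factor TX TiX pi d -> open_map pi ->
      (pi_pow pi) @^-1` (Nset TY TiY d.+1) = Nset TX TiX d.+1) /\
   (saturated pi (Nset TX TiX d.+1) -> top_char_factor TX TiX pi d)).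
Proof.
move=> tX tY mX mY fm; split.
  by move=> H1 H2; apply: part1.
by move=> H; apply: part2.
Qed.
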